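(* Let $\Phi:\{0,1\}^n\to\{0,1\}^n$ and let $\mu\in\{0,1\}^n$ be a fixed point of $\Phi$. Then: a) $\overline{W}(\mu)=\{\mu'\in\mathbf{B}^n:\exists\rho'\in P_n,\ \lim_{t\to\infty}\Phi^{\rho'}(\mu',t)=\mu\}$ and $\underline{W}(\mu)=\{\mu'\in\mathbf{B}^n:\forall\rho'\in P_n,\ \lim_{t\to\infty}\Phi^{\rho'}(\mu',t)=\mu\}$; b) $\{\mu\}\subset\underline{W}(\mu)\subset\overline{W}(\mu)$; in particular $\mu$ is p-attractive and n-attractive (i.e. $\overline{W}(\mu)\ne\emptyset$ and $\underline{W}(\mu)\neq\emptyset$); c) $\overline{W}(\mu)$ is p-invariant and $\underline{W}(\mu)$ is n-invariant.
   Context: Let $\mathbf{B}=\{0,1\}$ (discrete topology), $n\ge 1$, and $\Phi:\mathbf{B}^n\to\mathbf{B}^n$. For $\nu\in\mathbf{B}^n$ define $\Phi^\nu_i(\mu)=\mu_i$ if $\nu_i=0$ and $\Phi^\nu_i(\mu)=\Phi_i(\mu)$ if $\nu_i=1$. Put $\Phi^{\alpha^0\dots\alpha^k}=\Phi^{\alpha^k}\circ\cdots\circ\Phi^{\alpha^0}$. A sequence $(\alpha^k)_{k\in\mathbf{N}}$ in $\mathbf{B}^n$ is progressive if each set $\{k:\alpha^k_i=1\}$, $i=1,\dots,n$, is infinite. $Seq$ is the set of strictly increasing real sequences unbounded above. $P_n$ is the set of $\rho:\mathbf{R}\to\mathbf{B}^n$ with $\rho(t_k)=\alpha^k$ and $\rho(t)=0$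 for $t\notin\{t_k\}$, $\alpha$ progressive, $(t_k)\in Seq$. Orbit: $\Phi^\rho(\mu,t)=\mu$ for $t<t_0$, $=\Phi^{\alpha^0\dots\alpha^k}(\mu)$ for $t\in[t_k,t_{k+1})$; $Or_\rho(\mu)=\{\Phi^\rho(\mu,t):t\in\mathbf{R}\}$. For $x:\mathbf{R}\to\mathbf{B}^n$, $\lim_{t\to\infty}x(t)=x(t')$ means there is $t'$ with $x(t)=x(t')$ for all $t\ge t'$. $\omega_\rho(\mu)=\{\mu':\exists(s_k)\in Seq,\ \Phi^\rho(\mu,s_k)=\mu'$ for all large $k\}$. $\overline{W}(\mu)=\{\mu':\exists\rho'\in P_n,\ \omega_{\rho'}(\mu')\subset\{\mu\}\}$, $\underline{W}(\mu)=\{\mu':\forall\rho'\in P_n,\ \omega_{\rho'}(\mu')\subset\{\mu\}\}$. A nonempty set $A\subset\mathbf{B}^n$ is p-invariant if for every $\mu\in A$ there is $\rho\in P_n$ with $Or_\rho(\mu)\subset A$, and n-invariant if for every $\mu\in A$ and every $\rho\in P_n$, $Or_\rho(\mu)\subset A$. *)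

(* Defs.v *)
From mathcomp Require Import all_boot.
From Stdlib Require Import Reals ClassicalEpsilon.
Unset Printing Implicit Defensive.

Definition Bn (n : nat) := {ffun 'I_n -> bool}.
Definition zeroB (n : nat) : Bn n := [ffun => false].

Definition Phi_nu {n : nat} (Phi : Bn n -> Bn n) (nu : Bn n) (mu : Bn n) : Bn n :=
  [ffun i => if nu i then Phi mu i else mu i].

Fixpoint Phi_seq {n : nat} (Phi : Bn n -> Bn n) (alpha : nat -> Bn n) (k : nat) (mu : Bn n)
  : Bn n :=
  match k with
  | O => Phi_nu Phi (alpha O) mu
  | S k' => Phi_nu Phi (alpha k) (Phi_seq Phi alpha k' mu)
  end.

Definition progressive {n : nat} (alpha : nat -> Bn n) : Prop :=
  forall (i : 'I_n) (N : nat), exists k, (N <= k)%nat /\ alpha k i = true.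

Definition InSeq (t : nat -> R) : Prop :=
  (forall k, Rlt (t k) (t (S k))) /\ (forall M : R, exists k, Rlt M (t k)).

Definition Pn_rep {n : nat} (rho : R -> Bn n) (alpha : nat -> Bn n) (t : nat -> R) : Prop :=
  progressive alpha /\ InSeq t /\
  (forall k, rho (t k) = alpha k) /\
  (forall s : R, (forall k, s <> t k) -> rho s = zeroB n).

Definition in_Pn {n : nat} (rho : R -> Bn n) : Prop := exists alpha t, Pn_rep rho alpha t.

Definition orbit_rel {n : nat} (Phi : Bn n -> Bn n) (alpha : nat -> Bn n) (t : nat -> R)
  (mu : Bn n) (s : R) (x : Bn n) : Prop :=
  (Rlt s (t O) /\ x = mu) \/
  (exists k, Rle (t k) s /\ Rlt s (t (S k)) /\ x = Phi_seq Phi alpha k mu).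

(* For (alpha,t) with t in Seq, orbit_rel is functional and total, so this picks
   the unique value. *)
Definition phi_orbit {n : nat} (Phi : Bn n -> Bn n) (alpha : nat -> Bn n) (t : nat -> R)
  (mu : Bn n) (s : R) : Bn n :=
  epsilon (inhabits mu) (orbit_rel Phi alpha t mu s).

Definition Orb {n : nat} (Phi : Bn n -> Bn n) alpha t (mu : Bn n) : Bn n -> Prop :=
  fun x => exists s : R, phi_orbit Phi alpha t mu s = x.

Definition lim_is {n : nat} (x : R -> Bn n) (m : Bn n) : Prop :=
  exists t' : R, (forall s, Rle t' s -> x s = x t') /\ x t' = m.

Definition omega {n : nat} (Phi : Bn n -> Bn n) alpha t (mu : Bn n) : Bn n -> Prop :=
  fun mu' => exists sk : nat -> R, InSeq sk /\
    exists K, forall k, (K <= k)%nat -> phi_orbit Phi alpha t mu (sk k) = mu'.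

Definition W_over {n : nat} (Phi : Bn n -> Bn n) (mu : Bn n) : Bn n -> Prop :=
  fun mu' => exists rho alpha t, Pn_rep rho alpha t /\
    (forall x, omega Phi alpha t mu' x -> x = mu).

Definition W_under {n : nat} (Phi : Bn n -> Bn n) (mu : Bn n) : Bn n -> Prop :=
  fun mu' => forall rho alpha t, Pn_rep rho alpha t ->
    (forall x, omega Phi alpha t mu' x -> x = mu).

Definition p_invariant {n : nat} (Phi : Bn n -> Bn n) (A : Bn n -> Prop) : Prop :=
  (exists mu, A mu) /\
  forall mu, A mu -> exists rho alpha t, Pn_rep rho alpha t /\
    (forall x, Orb Phi alpha t mu x -> A x).

Definition n_invariant {n : nat} (Phi : Bn n -> Bn n) (A : Bn n -> Prop) : Prop :=
  (exists mu, A mu) /\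
  forall mu, A mu -> forall rho alpha t, Pn_rep rho alpha t ->
    (forall x, Orb Phi alpha t mu x -> A x).

(* Main.v *)
Require Import Defs.
From mathcomp Require Import all_boot.
From Stdlib Require Import Reals Lra ClassicalEpsilon Classical.

Section Aux.
Context {n : nat} {Phi : Bn n -> Bn n}.

Lemma inseq_lt {t : nat -> R} : InSeq t -> forall {i j}, (i < j)%nat -> Rlt (t i) (t j).
Proof.
move=> [Hs _] i; elim=> [|j IH] //.
rewrite ltnS leq_eqVlt => /orP [/eqP ->|Hij]; first exact: Hs.
have := IH Hij; have := Hs j; lra.
Qed.

Lemma inseq_le {t : nat -> R} : InSeq t -> forall {i j}, (i <= j)%nat -> Rle (t i) (t j).
Proof.
move=> Ht i j; rewrite leq_eqVlt => /orP [/eqP ->|H]; first lra.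
have := inseq_lt Ht H; lra.
Qed.

Lemma orbit_total alpha t mu s : InSeq t -> exists x, orbit_rel Phi alpha t mu s x.
Proof.
move=> Ht.
case: (Rlt_le_dec s (t O)) => Hs; first by exists mu; left.
have Hex : exists m, Rlt s (t m) by case: Ht => _ H; apply: H.
have Hexb : exists m, (Rlt_dec s (t m) : bool).
  by case: Hex => m Hm; exists m; case: Rlt_dec.
pose m := ex_minn Hexb.
have Hm : Rlt s (t m) by rewrite /m; case: ex_minnP => k; case: Rlt_dec.
have Hmin : forall j, Rlt s (t j) -> (m <= j)%nat.
  move=> j Hj; rewrite /m; case: ex_minnP => k _ H; apply: H; by case: Rlt_dec.
case Em: m => [|k].
  by exfalso; rewrite Em in Hm; lra.
exists (Phi_seq Phi alpha k mu); right; exists k; split; last by rewrite -Em.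
case: (Rlt_le_dec s (t k)) => // Hk.
have := Hmin _ Hk; rewrite Em ltnn //.
Qed.

Lemma orbit_spec alpha t mu s : InSeq t ->
  orbit_rel Phi alpha t mu s (phi_orbit Phi alpha t mu s).
Proof. move=> Ht; apply: epsilon_spec; exact: orbit_total. Qed.

Lemma orbit_after alpha t mu K s : InSeq t -> Rle (t K) s ->
  exists k, (K <= k)%nat /\ phi_orbit Phi alpha t mu s = Phi_seq Phi alpha k mu.
Proof.
move=> Ht HK; case: (orbit_spec alpha t mu s Ht) => [[Hs _]|[k [H1 [H2 H3]]]].
  by have := inseq_le Ht (leq0n K); lra.
exists k; split => //.
case: (leqP K k) => // Hk.
have := inseq_le Ht Hk; lra.
Qed.

Lemma orbit_cases alpha t mu x : InSeq t -> Orb Phi alpha t mu x ->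
  x = mu \/ exists k, x = Phi_seq Phi alpha k mu.
Proof.
move=> Ht [s <-]; case: (orbit_spec alpha t mu s Ht) => [[_ ->]|[k [_ [_ ->]]]].
  by left. by right; exists k.
Qed.

Lemma Phi_seq_ext {a b m x} : (forall j, (j <= m)%nat -> a j = b j) ->
  Phi_seq Phi a m x = Phi_seq Phi b m x.
Proof.
elim: m => [|m IH] H /=; first by rewrite H.
rewrite IH; first by rewrite H.
by move=> j Hj; apply: H; apply: leqW.
Qed.

Lemma Phi_seq_shift a k j x :
  Phi_seq Phi a (j + k.+1) x = Phi_seq Phi (fun i => a (i + k.+1)) j (Phi_seq Phi a k x).
Proof.
elim: j => [|j IH] //=.
by rewrite addSn /= IH.
Qed.

Lemma pigeon (T : finType) (y : nat -> T) :
  exists x, forall N, exists k, (N <= k)%nat /\ y k = x.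
Proof.
pose P x := forall N, exists k, (N <= k)%nat /\ y k = x.
have L : forall s : seq T, (exists x, P x) \/
   exists N, forall x, x \in s -> forall k, (N <= k)%nat -> y k <> x.
  elim=> [|x s [IH|[N1 IH]]]; first by right; exists 0%N.
  - by left.
  - case: (classic (P x)) => Px; first by left; exists x.
    case: (classic (exists N, forall k, (N <= k)%nat -> y k <> x)) => [[N2 HN2]|HN].
      right; exists (maxn N1 N2) => z; rewrite inE => /orP [/eqP ->|Hz] k Hk.
        by apply: HN2; apply: leq_trans Hk; apply: leq_maxr.
      by apply: IH => //; apply: leq_trans Hk; apply: leq_maxl.
    exfalso; apply: Px => N; apply: NNPP => Hno; apply: HN; exists N => k Hk E.
    by apply: Hno; exists k.
case: (L (enum T)) => // [[N H]].
by exfalso; apply: (H (y N) _ N) => //; rewrite mem_enum.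
Qed.

Context {mu : Bn n}.
Hypothesis Hfix : Phi mu = mu.

Definition reach alpha mu' := exists K, Phi_seq Phi alpha K mu' = mu.
Definition ocond alpha t mu' := forall x, omega Phi alpha t mu' x -> x = mu.

Lemma Phi_nu_fix nu : Phi_nu Phi nu mu = mu.
Proof. by apply/ffunP => i; rewrite ffunE Hfix; case: (nu i). Qed.

Lemma reach_stay {alpha mu' K m} : Phi_seq Phi alpha K mu' = mu -> (K <= m)%nat ->
  Phi_seq Phi alpha m mu' = mu.
Proof.
move=> HK; elim: m => [|m IH]; first by rewrite leqn0 => /eqP <-.
rewrite leq_eqVlt => /orP [/eqP <-|H] //=.
by rewrite IH // Phi_nu_fix.
Qed.

Lemma reach_lim {alpha t mu'} : InSeq t -> reach alpha mu' ->
  lim_is (phi_orbit Phi alpha t mu') mu.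
Proof.
move=> Ht [K HK].
have E : forall s, Rle (t K) s -> phi_orbit Phi alpha t mu' s = mu.
  move=> s Hs; case: (orbit_after alpha t mu' K s Ht Hs) => k [Hk ->].
  exact: reach_stay Hk.
exists (t K); split; last by apply: E; lra.
by move=> s Hs; rewrite E // E //; lra.
Qed.

Lemma lim_ocond {alpha t mu'} : lim_is (phi_orbit Phi alpha t mu') mu -> ocond alpha t mu'.
Proof.
move=> [t' [H1 H2]] x [sk [[Hs Hu] [K HK]]].
case: (Hu t') => k0 Hk0.
have Hsk : InSeq sk by split.
rewrite -(HK (maxn K k0)) ?leq_maxl // H1 //.
have := inseq_le Hsk (leq_maxr K k0); lra.
Qed.

Lemma phi_orbit_at alpha t mu' k : InSeq t ->
  phi_orbit Phi alpha t mu' (t k) = Phi_seq Phi alpha k mu'.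
Proof.
move=> Ht; case: (orbit_spec alpha t mu' (t k) Ht) => [[Hs _]|[j [H1 [H2 ->]]]].
  by have := inseq_le Ht (leq0n k); lra.
case: (ltngtP j k) => // Hjk.
- have := inseq_le Ht Hjk; lra.
- have := inseq_lt Ht Hjk; lra.
- by rewrite Hjk.
Qed.

Lemma ocond_reach {alpha t mu'} : InSeq t -> ocond alpha t mu' -> reach alpha mu'.
Proof.
move=> Ht Hc.
case: (pigeon _ (fun k => Phi_seq Phi alpha k mu')) => x Hx.
have Hb : forall N, exists k, (N <= k) && (Phi_seq Phi alpha k mu' == x).
  move=> N; case: (Hx N) => k [Hk Ek]; exists k; by rewrite Hk Ek eqxx.
pose nxt N := ex_minn (Hb N).
have Pn : forall N, (N <= nxt N)%nat /\ Phi_seq Phi alpha (nxt N) mu' = x.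
  by move=> N; rewrite /nxt; case: ex_minnP => k /andP [H1 /eqP H2] _.
pose fix g m := match m with O => nxt O | S m' => nxt (g m').+1 end.
have Hg1 : forall m, (g m < g m.+1)%nat by move=> m /=; case: (Pn (g m).+1).
have Hg2 : forall m, (m <= g m)%nat.
  elim=> [|m IH] //; exact: leq_ltn_trans IH (Hg1 m).
have Hg3 : forall m, Phi_seq Phi alpha (g m) mu' = x by case=> [|m]; [case: (Pn 0%N) | case: (Pn (g m).+1)].
have Hxm : x = mu.
  apply: Hc; exists (fun m => t (g m)); split; [split|].
  - by move=> m; apply: inseq_lt.
  - move=> M; case: (Ht) => _ Hu; case: (Hu M) => k Hk; exists k.
    have := inseq_le Ht (Hg2 k); lra.
  - by exists 0%N => k _; rewrite phi_orbit_at // Hg3.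
by exists (g 0%N); rewrite Hg3.
Qed.

Lemma mkPn {alpha : nat -> Bn n} : progressive alpha -> exists rho, Pn_rep rho alpha (fun k => INR k).
Proof.
move=> Hp.
pose rho (s : R) := match excluded_middle_informative (exists k, s = INR k) with
  | left H => alpha (proj1_sig (constructive_indefinite_description _ H))
  | right _ => zeroB n end.
have Hin : InSeq (fun k => INR k).
  split; first by move=> k; rewrite S_INR; lra.
  by move=> M; case: (INR_unbounded M) => k Hk; exists k.
exists rho; split => //; split => //; split.
- move=> k; rewrite /rho; case: excluded_middle_informative => [H|H].
    case: constructive_indefinite_description => j /= Hj.
    by rewrite (INR_eq _ _ Hj).
  by exfalso; apply: H; exists k.
- move=> s Hs; rewrite /rho; case: excluded_middle_informative => [[k Hk]|] //.
  by exfalso; apply: (Hs k).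
Qed.

Lemma Wover_iff mu' : W_over Phi mu mu' <-> exists alpha, progressive alpha /\ reach alpha mu'.
Proof.
split.
- move=> [rho [alpha [t [[Hp [Ht _]] Hc]]]]; exists alpha; split => //.
  exact: ocond_reach Ht Hc.
- move=> [alpha [Hp Hr]]; case: (mkPn Hp) => rho Hrho.
  exists rho, alpha, (fun k => INR k); split => //.
  apply: lim_ocond; apply: reach_lim => //; by case: Hrho => _ [].
Qed.

Lemma Wunder_iff mu' : W_under Phi mu mu' <-> forall alpha, progressive alpha -> reach alpha mu'.
Proof.
split.
- move=> H alpha Hp; case: (mkPn Hp) => rho Hrho.
  apply: (ocond_reach (t := fun k => INR k)); first by case: Hrho => _ [].
  exact: H Hrho.
- move=> H rho alpha t [Hp [Ht Hr]]; apply: lim_ocond; apply: reach_lim => //.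
  exact: H.
Qed.

Lemma reach_mu alpha : reach alpha mu.
Proof. by exists 0%N => /=; rewrite Phi_nu_fix. Qed.

End Aux.

Theorem theorem45 (n : nat) (Hn : (1 <= n)%nat) (Phi : Bn n -> Bn n) (mu : Bn n)
  (Hfix : Phi mu = mu) :
  (* a) *)
  ((forall mu', W_over Phi mu mu' <->
      exists rho alpha t, Pn_rep rho alpha t /\ lim_is (phi_orbit Phi alpha t mu') mu) /\
   (forall mu', W_under Phi mu mu' <->
      forall rho alpha t, Pn_rep rho alpha t -> lim_is (phi_orbit Phi alpha t mu') mu)) /\
  (* b) *)
  (W_under Phi mu mu /\ (forall mu', W_under Phi mu mu' -> W_over Phi mu mu') /\
   (exists mu', W_over Phi mu mu') /\ (exists mu', W_under Phi mu mu')) /\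
  (* c) *)
  (p_invariant Phi (W_over Phi mu) /\ n_invariant Phi (W_under Phi mu)).
Proof.
have Hone : progressive (fun _ : nat => [ffun _ : 'I_n => true] : Bn n).
  by move=> i N; exists N; rewrite ffunE.
have WUm : W_under Phi mu mu by apply/Wunder_iff => // alpha _; apply: reach_mu.
have WUO : forall mu', W_under Phi mu mu' -> W_over Phi mu mu'.
  move=> mu' /Wunder_iff H; apply/Wover_iff => //; exists (fun _ => [ffun _ => true]).
  by split => //; apply: H.
split; [split|split].
- move=> mu'; split.
  + move=> [rho [alpha [t [Hr Hc]]]]; exists rho, alpha, t; split => //.
    case: Hr => _ [Ht _]; apply: reach_lim => //; exact: ocond_reach Ht Hc.
  + move=> [rho [alpha [t [Hr Hl]]]]; exists rho, alpha, t; split => //.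
    exact: lim_ocond.
- move=> mu'; split.
  + move=> H rho alpha t Hr; case: (Hr) => _ [Ht _].
    apply: reach_lim => //; apply: ocond_reach Ht _; exact: H Hr.
  + move=> H rho alpha t Hr; apply: lim_ocond. apply: (H _ _ _ Hr).
- split; first exact: WUm. split; first exact: WUO.
  by split; exists mu => //; apply: WUO.
split.
- split; first by exists mu; apply: WUO.
  move=> mu' [rho [alpha [t [Hr Hc]]]].
  exists rho, alpha, t; split => //.
  case: (Hr) => Hp [Ht _].
  have [K HK] := ocond_reach Ht Hc.
  move=> x /(orbit_cases _ _ _ _ Ht) [->|[k ->]]; first by exists rho, alpha, t.
  apply/Wover_iff => //; exists (fun i => alpha (i + k.+1)); split.
  + move=> i N; case: (Hp i (N + k.+1)) => j [Hj Ej].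
    have Hkj : (k.+1 <= j)%nat by apply: leq_trans Hj; apply: leq_addl.
    exists (j - k.+1); split; first by rewrite leq_subRL // addnC.
    by rewrite subnK.
  + exists K; rewrite -Phi_seq_shift; apply: reach_stay HK _ => //.
    by rewrite leq_addr.
- split; first by exists mu.
  move=> mu' Hmu' rho alpha t [Hp [Ht _]] x /(orbit_cases _ _ _ _ Ht) [->|[k ->]] //.
  apply/Wunder_iff => // beta Hb.
  pose gam j := if (j <= k)%nat then alpha j else beta (j - k.+1).
  have Hgs : forall j, gam (j + k.+1) = beta j.
    by move=> j; rewrite /gam ifN ?addnK // -ltnNge addnS ltnS leq_addl.
  have Hg : progressive gam.
    move=> i N; case: (Hb i N) => j [Hj Ej]; exists (j + k.+1); split.
      by apply: leq_trans Hj (leq_addr _ _).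
    by rewrite Hgs.
  have [K HK] := (proj1 (Wunder_iff Hfix mu') Hmu' gam Hg).
  exists K.
  have -> : Phi_seq Phi alpha k mu' = Phi_seq Phi gam k mu'.
    by apply: Phi_seq_ext => j Hj; rewrite /gam Hj.
  rewrite (Phi_seq_ext (b := fun i => gam (i + k.+1))); last first.
    by move=> j _; rewrite Hgs.
  rewrite -Phi_seq_shift; apply: reach_stay HK _ => //.
  by rewrite leq_addr.
Qed.
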